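(* Let $d>1$, let $F$ be a field of characteristic $0$ or coprime to $d$ with $\mu_{d^2}\subset F$, and let $E/F$ be a cyclic Galois extension of degree $d$. Let $\mathcal{G}=\mathrm{Gal}(F_{\mathrm{sep}}/F)$, $\mathcal{H}=\mathrm{Gal}(F_{\mathrm{sep}}/E)$, and $G=\mathcal{G}/\mathcal{H}=\langle\tau\rangle$, cyclic of order $d$. Consider the discrete $\mathcal{G}$-modules (action through $G$) $\overline{M_1}=\mathbb{Z}/d\mathbb{Z}$ (trivial action), $\overline{M_2}=\overline{M_3}=(\mathbb{Z}/d\mathbb{Z})[G]$ (left multiplication), $\overline{M_4}=\mathbb{Z}/d\mathbb{Z}$ (trivial), and the maps $d_1:\overline{M_1}\to\overline{M_2}$, $n\mapsto n\sum_{g\in G}g$; $d_2:\overline{M_2}\to\overline{M_3}$, $x\mapsto x(1-\tau)$; $d_3:\overline{M_3}\to\overline{M_4}$, $\sum_g c_g g\mapsto \sum_g c_g$; and $h_2:\overline{M_3}\to\overline{M_2}$, $x\mapsto x\sum_{i=0}^{d-1}(-i)\tau^i$. Let $\ell:\overline{M_4}\to\overline{M_3}$ be the additive map $x\mapsto x\cdot 1_G$. Let $n\ge 1$ and let $c\in Z^{n-1}(\mathcal{G},\overline{M_4})$ be an inhomogeneous cocycle, and $\delta$ the coboundary of the (inhomogeneous) bar complex. Then $h_2(\delta(\ell\circ c))$ takes values in $d_1(\overline{M_1})$ and \[ -d_1^{-1}\big(h_2(\delta(\ell\circ c))\big)=-\chi_{\mathcal{H}}\smile c, \] where $\chi_{\mathcal{H}}:\mathcal{G}\to\mathbb{Z}/d\mathbb{Z}$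 is the character with $\chi_{\mathcal{H}}(g)=k$ whenever $g\mathcal{H}=\tau^k$, and $(\chi_{\mathcal{H}}\smile c)(g_1,\dots,g_n)=\chi_{\mathcal{H}}(g_1)\,c(g_2,\dots,g_n)$.
   Context: The left-hand side is the paper's connecting map $\eta(c)$ in the cyclic case; $d_1^{-1}$ denotes the inverse of the injective map $d_1$ on its image. *)

(* Defs.v *)
From mathcomp Require Import all_boot all_order all_algebra.
Set Implicit Arguments. Unset Strict Implicit. Unset Printing Implicit Defensive.
Import GRing.Theory.
Local Open Scope ring_scope.

Definition is_group (Gam : Type) (mul : Gam -> Gam -> Gam) (one : Gam)
    (inv : Gam -> Gam) : Prop :=
  [/\ forall x y z, mul x (mul y z) = mul (mul x y) z,
      forall x, mul one x = x, forall x, mul x one = x,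
      forall x, mul (inv x) x = one & forall x, mul x (inv x) = one].

(* An inhomogeneous k-cochain with values in M: a function of k group elements,
   the arguments g_1,...,g_k being given as a function 'I_k -> Gam (0-based). *)
Definition cochain (Gam : Type) (M : Type) (k : nat) := ('I_k -> Gam) -> M.

Section Bar.
Variables (Gam : Type) (mul : Gam -> Gam -> Gam).

Definition ctail k (gs : 'I_k.+1 -> Gam) : 'I_k -> Gam :=
  fun j => gs (lift ord0 j).
Definition cinit k (gs : 'I_k.+1 -> Gam) : 'I_k -> Gam :=
  fun j => gs (widen_ord (leqnSn k) j).
(* for 0-based i < k: (g_1,...,g_{k+1}) |-> (g_1,..,g_{i+1} g_{i+2},..,g_{k+1}) *)
Definition cmerge k (gs : 'I_k.+1 -> Gam) (i : 'I_k) : 'I_k -> Gam :=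
  fun j => if (j < i)%N then gs (widen_ord (leqnSn k) j)
           else if j == i then mul (gs (widen_ord (leqnSn k) j)) (gs (lift ord0 j))
           else gs (lift ord0 j).

Definition cobound (M : zmodType) (act : Gam -> M -> M) k
    (f : cochain Gam M k) : cochain Gam M k.+1 :=
  fun gs => act (gs ord0) (f (ctail gs))
            + \sum_(i < k) (f (cmerge gs i) *~ ((-1) ^+ i.+1))
            + f (cinit gs) *~ ((-1) ^+ k.+1).
End Bar.

(* We identify tau^k with k : 'Z_d (d > 1); an element sum_k c_k tau^k of
   (Z/dZ)[G] is the finite function k |-> c_k. *)
Definition RG (d : nat) := {ffun 'Z_d -> 'Z_d}.

Section GroupRing.
Variable d : nat.

Definition rg_elt (k : 'Z_d) : RG d := [ffun j => (j == k)%:R].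
Definition rg_one : RG d := rg_elt 0.
Definition rg_tau : RG d := rg_elt 1.
Definition rg_scale (a : 'Z_d) (x : RG d) : RG d := [ffun j => a * x j].
Definition rg_mul (x y : RG d) : RG d :=
  [ffun k => \sum_(i : 'Z_d) x i * y (k - i)].
Definition rg_norm : RG d := \sum_(g : 'Z_d) rg_elt g.

Definition d1 (n : 'Z_d) : RG d := rg_scale n rg_norm.
Definition d2 (x : RG d) : RG d := rg_mul x (rg_one - rg_tau).
Definition d3 (x : RG d) : 'Z_d := \sum_(g : 'Z_d) x g.
Definition h2_elt : RG d :=
  \sum_(i < d) rg_scale (- (i%:R)) (rg_elt (i%:R)).
Definition h2 (x : RG d) : RG d := rg_mul x h2_elt.
Definition ell (x : 'Z_d) : RG d := rg_scale x rg_one.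

Definition rg_act (k : 'Z_d) (x : RG d) : RG d := rg_mul (rg_elt k) x.
End GroupRing.

Definition cup_chi (Gam : Type) (d : nat) (chi : Gam -> 'Z_d) k
    (c : cochain Gam 'Z_d k) : cochain Gam 'Z_d k.+1 :=
  fun gs => chi (gs ord0) * c (ctail gs).

(* Main.v *)
Require Import Defs.
From mathcomp Require Import all_boot all_order all_algebra.
From mathcomp Require Import ring.
Import GRing.Theory.
Local Open Scope ring_scope.

Lemma sum_eqn (R : nmodType) n n' (F : nat -> R) : n = n' ->
  \sum_(i < n) F i = \sum_(i < n') F i.
Proof. by move=> ->. Qed.

Lemma h2_eltE d (hd : (1 < d)%N) (t : 'Z_d) : h2_elt d t = - t.
Proof.
rewrite /h2_elt sum_ffunE.
rewrite (@sum_eqn _ _ _ (fun i : nat => rg_scale (- (i%:R : 'Z_d)) (rg_elt (i%:R : 'Z_d)) t) (esym (Zp_cast hd))).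
rewrite (bigD1 t) //= big1 ?addr0.
  by rewrite /rg_scale /rg_elt !ffunE natr_Zp eqxx mulr1.
move=> i /negbTE hi; rewrite /rg_scale /rg_elt !ffunE natr_Zp.
by rewrite eq_sym hi mulr0.
Qed.

Lemma ffunMnE (T : finType) (R : zmodType) (f : {ffun T -> R}) n j :
  (f *+ n) j = f j *+ n.
Proof. by elim: n => [|n IH]; rewrite ?mulr0n ?ffunE // !mulrS ffunE IH. Qed.
Lemma ffunNE (T : finType) (R : zmodType) (f : {ffun T -> R}) j :
  (- f) j = - f j.
Proof. by rewrite ffunE. Qed.
Lemma ffunMzE (T : finType) (R : zmodType) (f : {ffun T -> R}) z j :
  (f *~ z) j = f j *~ z.
Proof. by case: z => n; rewrite /intmul ?ffunNE ffunMnE. Qed.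

Lemma rgMzE d (f : RG d) z j : (f *~ z) j = f j *~ z.
Proof. exact: ffunMzE. Qed.

Lemma rgDE d (f g : RG d) j : (f + g) j = f j + g j.
Proof. by rewrite ffunE. Qed.

Lemma sum_delta d (k : 'Z_d) (F : 'Z_d -> 'Z_d) :
  \sum_(i : 'Z_d) (i == k)%:R * F i = F k.
Proof.
rewrite (bigD1 k) //= eqxx mul1r big1 ?addr0 // => i /negbTE ->.
by rewrite mul0r.
Qed.

Lemma d1E d (n : 'Z_d) j : d1 n j = n.
Proof.
rewrite /d1 /rg_scale ffunE /rg_norm sum_ffunE.
under eq_bigr do rewrite /rg_elt ffunE.
have -> : \sum_(i : 'Z_d) (j == i)%:R = 1 :> 'Z_d.
  rewrite -[RHS](@sum_delta d j (fun=> 1)).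
  by apply: eq_bigr => i _ /=; rewrite mulr1 eq_sym.
by rewrite mulr1.
Qed.

Lemma ellE d (x : 'Z_d) j : ell x j = x * (j == 0)%:R.
Proof. by rewrite /ell /rg_scale /rg_one /rg_elt !ffunE. Qed.

Theorem theorem4p6
  (d : nat) (hd : (1 < d)%N)
  (Gam : Type) (mul : Gam -> Gam -> Gam) (one : Gam) (inv : Gam -> Gam)
  (hGam : is_group mul one inv)
  (chi : Gam -> 'Z_d)
  (chi_mul : forall g h, chi (mul g h) = chi g + chi h)
  (chi_surj : forall k : 'Z_d, exists g, chi g = k)
  (m : nat) (c : cochain Gam 'Z_d m)
  (c_cocycle : forall gs, cobound mul (fun _ (x : 'Z_d) => x) c gs = 0) :
  let X := cobound mul (fun g x => rg_act (chi g) x) (fun gs => ell (c gs)) in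
  (forall gs, exists n1 : 'Z_d, d1 n1 = h2 (X gs)) /\
  (forall gs (n1 : 'Z_d), d1 n1 = h2 (X gs) -> - n1 = - cup_chi chi c gs).
Proof.
move=> X.
have key : forall gs j, h2 (X gs) j = chi (gs ord0) * c (ctail gs).
  move=> gs j.
  set k := chi (gs ord0); set a := c (ctail gs).
  have cc := c_cocycle gs; rewrite /cobound in cc.
  set S := \sum_(i < m) _ in cc; set T := _ *~ _ in cc.
  have XE : forall i, X gs i = a * (i == k)%:R - a * (i == 0)%:R.
    move=> i; rewrite /X /cobound !rgDE sum_ffunE rgMzE ellE.
    under eq_bigr do rewrite rgMzE ellE -mulrzAl.
    rewrite -mulr_suml -mulrzAl -addrA -mulrDl.
    have -> : S + T = - a by apply/eqP; rewrite -addr_eq0 addrC addrA; apply/eqP; exact: cc.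
    rewrite /rg_act /rg_mul ffunE.
    under eq_bigr do rewrite /rg_elt ffunE ellE.
    rewrite sum_delta subr_eq0 mulNr; congr (_ - _).
  rewrite /h2 /rg_mul ffunE.
  under eq_bigr do rewrite XE h2_eltE // mulrBl.
  rewrite sumrB.
  rewrite (eq_bigr (fun i => (i == k)%:R * (a * - (j - i)))); last by move=> i _; ring.
  rewrite [X in _ - X](eq_bigr (fun i => (i == 0)%:R * (a * - (j - i)))); last by move=> i _; ring.
  rewrite !sum_delta; ring.
split.
  move=> gs; exists (chi (gs ord0) * c (ctail gs)).
  by apply/ffunP => j; rewrite d1E key.
move=> gs n1 E.
have := congr1 (fun f : RG d => f 0) E; rewrite /= d1E key => ->.
by [].
Qed.
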